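(* Let $F$ be a finite field of odd characteristic in which $-1$ is not a square, fix $C_0\ge1$, let $m\ge1$, and let $A,B\subseteq F^2$ with $m/2\le|A|,|B|\le 2m$ be such that either both $A$ and $B$ are $k$-regular (with constant $C_0$) for the same $k$, or both $A$ and $B$ are irregular. Then $$\min\Big\{|F|\big(\mathcal{R}(A)\mathcal{R}(B)\big)^{1/2},\ \mathcal{T}(A,B)\Big\}\lesssim m^{8/3}|F|^{2/3}+m^{7/2},$$ with implied constant depending only on $C_0$.
   Context: $x\cdot y=x_1y_1+x_2y_2$ on $F^2$. $(x_0,x_1,x_2)$ is a corner if $(x_1-x_0)\cdot(x_2-x_1)=0$; $(x_0,x_1,x_2,x_3)$ is a rectangle if each $(x_i,x_{i+1},x_{i+2})$, indices mod 4, is a corner; $\mathcal{R}(A)$ is the number of rectangles in $A^4$. $(x_1,x_2,x_3,x_4)$ is a trapezoid if $x_1-x_2=\lambda(x_3-x_4)$ for some $\lambda\in F$; $\mathcal{T}(A,B)$ is the number of trapezoids with $x_1,x_2\in A$, $x_3,x_4\in B$. A line is $\{p+tv:t\in F\}$, $v\ne0$. $A$ is $k$-regular (with constant $C_0$) if $k\le C_0|A|^{1/2}$ and there exist a set $L$ of lines with $k/C_0\le|L|\le C_0k$ and a partition $A=\bigsqcup_{\ell\in L}A_\ell$, $A_\ell\subseteq\ell$, with $|A|/(C_0k)\le|A_\ell|\le C_0|A|/k$ for each $\ell$. $A$ is irregular if $|\ell\cap A|\le|A|^{1/2}$ for every line $\ell$. *)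

(* Defs.v *)
From mathcomp Require Import all_boot all_order all_algebra.
From Stdlib Require Import Reals.
Set Implicit Arguments. Unset Strict Implicit. Unset Printing Implicit Defensive.
Import GRing.Theory.

Section Defs.
Variable F : finFieldType.

Definition pt := (F * F)%type.
Local Open Scope ring_scope.

Definition neg1_nonsquare : Prop := ~ (exists x : F, x * x = -1).

Definition odd_char : Prop := 2%N \notin [pchar F].

Definition psub (x y : pt) : pt := (x.1 - y.1, x.2 - y.2).
Definition dot (x y : pt) : F := x.1 * y.1 + x.2 * y.2.

Definition corner (x0 x1 x2 : pt) : bool := dot (psub x1 x0) (psub x2 x1) == 0.

Definition rectangle (x0 x1 x2 x3 : pt) : bool :=
  [&& corner x0 x1 x2, corner x1 x2 x3, corner x2 x3 x0 & corner x3 x0 x1].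

Definition nrect (A : {set pt}) : nat :=
  #|[set q : pt * pt * pt * pt |
      [&& q.1.1.1 \in A, q.1.1.2 \in A, q.1.2 \in A, q.2 \in A &
          rectangle q.1.1.1 q.1.1.2 q.1.2 q.2]]|.

Definition trapezoid (x1 x2 x3 x4 : pt) : bool :=
  [exists l : F, psub x1 x2 == (l * (psub x3 x4).1, l * (psub x3 x4).2)].

Definition ntrap (A B : {set pt}) : nat :=
  #|[set q : pt * pt * pt * pt |
      [&& q.1.1.1 \in A, q.1.1.2 \in A, q.1.2 \in B, q.2 \in B &
          trapezoid q.1.1.1 q.1.1.2 q.1.2 q.2]]|.

Definition line_through (p v : pt) : {set pt} :=
  [set (p.1 + t * v.1, p.2 + t * v.2) | t : F].

Definition is_line (l : {set pt}) : Prop :=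
  exists p v : pt, v != (0, 0) /\ l = line_through p v.

Local Close Scope ring_scope.
Local Open Scope R_scope.

Definition k_regular (C0 k : R) (A : {set pt}) : Prop :=
  k <= C0 * sqrt (INR #|A|) /\
  exists (L : {set {set pt}}) (AL : {set pt} -> {set pt}),
    (forall l, l \in L -> is_line l) /\
    k / C0 <= INR #|L| <= C0 * k /\
    A = \bigcup_(l in L) AL l /\
    (forall l1 l2, l1 \in L -> l2 \in L -> l1 != l2 -> [disjoint AL l1 & AL l2]) /\
    (forall l, l \in L -> (AL l \subset l) /\
        INR #|A| / (C0 * k) <= INR #|AL l| <= C0 * INR #|A| / k).

Definition irregular (A : {set pt}) : Prop :=
  forall l, is_line l -> INR #|l :&: A| <= sqrt (INR #|A|).

End Defs.

(* Main.v *)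
Require Import Defs.
From Stdlib Require Import Reals Lra Psatz.

Section RealPart.
Local Open Scope R_scope.

Ltac pl := apply Rmult_le_compat; [repeat apply Rmult_le_pos; nra | nra | idtac | nra].

Lemma real_core (C0 k s Q a b la lb ma mb R1 R2 T : R) :
  1 <= C0 -> 0 < s -> 0 < Q ->
  s^6 / 2 <= a <= 2 * s^6 -> s^6 / 2 <= b <= 2 * s^6 ->
  k <= 2 * C0 * s^3 ->
  1 <= la <= C0 * k -> 1 <= lb <= C0 * k ->
  0 <= ma -> ma * k <= C0 * a -> 0 <= mb -> mb * k <= C0 * b ->
  0 <= R1 <= a*a + a*a*(2*la) + la*(la+ma)*la*ma ->
  0 <= R2 <= b*b + b*b*(2*lb) + lb*(lb+mb)*lb*mb ->
  0 <= T <= a*b*b*la + la*(la+ma)*b*(lb+mb)*ma ->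
  Rmin (Q^3 * sqrt (R1 * R2)) T <=
  (24 * C0^7 + 144 * C0^8 + 16 * C0^2) * (s^16 * Q^2 + s^21).
Proof.
intros HC Hs HQ [Ha1 Ha2] [Hb1 Hb2] Hk [Hla1 Hla2] [Hlb1 Hlb2] Hma Hmak Hmb Hmbk
  [HR1 HR1'] [HR2 HR2'] [HT HT'].
remember (s^3) as t eqn:Ht.
assert (Hm : s^6 = t * t) by (subst; ring).
rewrite Hm in *.
assert (Ht0 : 0 < t) by (subst; apply pow_lt; lra).
assert (HC0 : 0 < C0) by lra.
assert (Hk0 : 0 < k) by nra.
assert (Hkk : k * k <= 4 * C0^2 * (t*t)).
{ assert (k * k <= (2 * C0 * t) * (2 * C0 * t)) by (apply Rmult_le_compat; lra). nra. }
assert (Hsum : (la + ma) * k <= 6 * C0^3 * (t*t)).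
{ assert (la * k <= C0 * k * k) by nra.
  assert (C0 * (k*k) <= C0 * (4 * C0^2 * (t*t))) by nra.
  assert (C0 * a <= C0^3 * (2 * (t*t))).
  { assert (C0 <= C0^3) by (replace (C0^3) with (C0 * (C0 * C0)) by ring; nra). nra. }
  nra. }
assert (Hsumb : (lb + mb) * k <= 6 * C0^3 * (t*t)).
{ assert (lb * k <= C0 * k * k) by nra.
  assert (C0 * (k*k) <= C0 * (4 * C0^2 * (t*t))) by nra.
  assert (C0 * b <= C0^3 * (2 * (t*t))).
  { assert (C0 <= C0^3) by (replace (C0^3) with (C0 * (C0 * C0)) by ring; nra). nra. }
  nra. }
remember (t*t) as m eqn:Hmm.
assert (Hm0 : 0 < m) by (subst; nra).
assert (Hmak' : ma * k <= 2 * C0 * m) by nra.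
assert (Hmbk' : mb * k <= 2 * C0 * m) by nra.
assert (HY : la*(la+ma)*b*(lb+mb)*ma * (k*k) <= 144 * C0^8 * (m*m*m*m)).
{ assert (E : la*(la+ma)*b*(lb+mb)*ma * (k*k*k) =
    la * ((la+ma)*k) * b * ((lb+mb)*k) * (ma*k)) by ring.
  assert (la * ((la+ma)*k) * b * ((lb+mb)*k) * (ma*k) <=
          (C0*k) * (6*C0^3*m) * (2*m) * (6*C0^3*m) * (2*C0*m)).
  { pl; pl; pl; pl; nra. }
  assert (la*(la+ma)*b*(lb+mb)*ma * (k*k) * k <= (144 * C0^8 * (m*m*m*m)) * k) by nra.
  apply Rmult_le_reg_r with k; lra. }
assert (HCk : 1 <= C0 * k) by lra.
assert (HC7 : C0 <= C0^7).
{ assert (1 <= C0^6) by (replace 1 with (1^6) by ring; apply pow_incr; lra).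
  replace (C0^7) with (C0 * C0^6) by ring. nra. }
assert (HR1b : R1 <= 24 * C0^7 * k * (m*m)).
{ assert (a*a <= 4*(m*m)) by nra.
  assert (a*a*(2*la) <= 4*(m*m)*(2*(C0*k))).
  { apply Rmult_le_compat; nra. }
  assert (H3 : la*(la+ma)*la*ma*(k*k) <= (C0*k)*(C0*k)*(6*C0^3*m)*(2*C0*m)).
  { replace (la*(la+ma)*la*ma*(k*k)) with (la*la*((la+ma)*k)*(ma*k)) by ring.
    pl; pl; pl; nra. }
  assert (H4 : la*(la+ma)*la*ma <= 12*C0^6*(m*m)).
  { apply Rmult_le_reg_r with (k*k). nra.
    replace (12*C0^6*(m*m)*(k*k)) with ((C0*k)*(C0*k)*(6*C0^3*m)*(2*C0*m)) by ring. lra. }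
  assert (12*C0^6*(m*m) <= 12*C0^7*k*(m*m)).
  { replace (12*C0^7*k*(m*m)) with (12*C0^6*(m*m)*(C0*k)) by ring.
    assert (0 <= 12*C0^6*(m*m)) by (assert (0 < C0^6) by (apply pow_lt; lra); nra). nra. }
  assert (4*(m*m) <= 4*C0*k*(m*m)) by nra.
  assert (4*(m*m)*(2*(C0*k)) = 8*C0*k*(m*m)) by ring.
  assert (0 <= k*(m*m)) by nra.
  nra. }
assert (HR2b : R2 <= 24 * C0^7 * k * (m*m)).
{ assert (b*b <= 4*(m*m)) by nra.
  assert (b*b*(2*lb) <= 4*(m*m)*(2*(C0*k))).
  { apply Rmult_le_compat; nra. }
  assert (H3 : lb*(lb+mb)*lb*mb*(k*k) <= (C0*k)*(C0*k)*(6*C0^3*m)*(2*C0*m)).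
  { replace (lb*(lb+mb)*lb*mb*(k*k)) with (lb*lb*((lb+mb)*k)*(mb*k)) by ring.
    pl; pl; pl; nra. }
  assert (H4 : lb*(lb+mb)*lb*mb <= 12*C0^6*(m*m)).
  { apply Rmult_le_reg_r with (k*k). nra.
    replace (12*C0^6*(m*m)*(k*k)) with ((C0*k)*(C0*k)*(6*C0^3*m)*(2*C0*m)) by ring. lra. }
  assert (12*C0^6*(m*m) <= 12*C0^7*k*(m*m)).
  { replace (12*C0^7*k*(m*m)) with (12*C0^6*(m*m)*(C0*k)) by ring.
    assert (0 <= 12*C0^6*(m*m)) by (assert (0 < C0^6) by (apply pow_lt; lra); nra). nra. }
  assert (4*(m*m) <= 4*C0*k*(m*m)) by nra.
  assert (4*(m*m)*(2*(C0*k)) = 8*C0*k*(m*m)) by ring.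
  assert (0 <= k*(m*m)) by nra.
  nra. }
assert (Hsq : sqrt (R1 * R2) <= 24 * C0^7 * k * (m*m)).
{ assert (0 <= 24 * C0^7 * k * (m*m)) by nra.
  rewrite <- (sqrt_square (24 * C0^7 * k * (m*m))) by lra.
  apply sqrt_le_1_alt. apply Rmult_le_compat; lra. }
assert (Hu0 : 0 < s^4) by (apply pow_lt; lra).
assert (Emm : m * m = s^4 * s^4 * s^4) by (rewrite <- Hm; ring).
assert (E16 : s^16 = s^4 * s^4 * s^4 * s^4) by ring.
assert (E21 : s^21 = m*m*m*t) by (rewrite <- Hm, Ht; ring).
rewrite E16, E21. rewrite Emm in Hsq.
assert (HY' : la*(la+ma)*b*(lb+mb)*ma * (k*k) <= 144 * C0^8 * (s^4*s^4*s^4*(s^4*s^4*s^4))).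
{ replace (s^4*s^4*s^4*(s^4*s^4*s^4)) with (m*m*m*m) by (rewrite <- Hm; ring). exact HY. }
clear HY.
set (u := s^4) in *.
assert (HX : a*b*b*la <= 16 * C0^2 * (m*m*m*t)).
{ assert (a*b*b*la <= (2*m)*(2*m)*(2*m)*(C0*(2*C0*t))).
  { assert (C0 * k <= C0 * (2 * C0 * t)) by nra. pl; pl; nra. }
  nra. }
assert (HK1 : 0 <= u*u*u*u*Q^2) by (assert (0 < Q^2) by (apply pow_lt; lra); nra).
assert (HK2 : 0 <= m*m*m*t) by (left; repeat apply Rmult_lt_0_compat; lra).
assert (HC2 : 0 < C0^2) by (apply pow_lt; lra).
assert (HC8 : 0 < C0^8) by (apply pow_lt; lra).
assert (HC7' : 0 < C0^7) by (apply pow_lt; lra).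
destruct (Rle_or_lt (Q * k) u) as [Hc|Hc].
- apply Rle_trans with (Q^3 * sqrt (R1 * R2)); [apply Rmin_l|].
  assert (Q^3 * sqrt (R1*R2) <= Q^3 * (24 * C0^7 * k * (u*u*u))).
  { apply Rmult_le_compat_l; [apply pow_le; lra | exact Hsq]. }
  assert (Q^3 * (24 * C0^7 * k * (u*u*u)) = 24 * C0^7 * (Q*Q*u*u*u) * (Q*k)) by ring.
  assert (24 * C0^7 * (Q*Q*u*u*u) * (Q*k) <= 24 * C0^7 * (Q*Q*u*u*u) * u).
  { apply Rmult_le_compat_l; [|exact Hc]. assert (0 < Q*Q*u*u*u) by (repeat apply Rmult_lt_0_compat; lra). nra. }
  assert (24 * C0^7 * (Q*Q*u*u*u) * u = 24 * C0^7 * (u*u*u*u*Q^2)) by ring.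
  nra.
- apply Rle_trans with T; [apply Rmin_r|].
  assert (HYb : la*(la+ma)*b*(lb+mb)*ma <= 144 * C0^8 * (u*u*u*u*Q^2)).
  { apply Rmult_le_reg_r with (k*k). nra.
    apply Rle_trans with (144 * C0^8 * (u*u*u*(u*u*u))); [exact HY'|].
    assert (u*u <= (Q*k)*(Q*k)) by (apply Rmult_le_compat; lra).
    assert (0 <= 144 * C0^8 * (u*u*u*u)) by (assert (0 < u*u*u*u) by (repeat apply Rmult_lt_0_compat; lra); nra).
    replace (144 * C0^8 * (u*u*u*(u*u*u))) with (144 * C0^8 * (u*u*u*u) * (u*u)) by ring.
    replace (144 * C0^8 * (u*u*u*u*Q^2) * (k*k)) with (144 * C0^8 * (u*u*u*u) * ((Q*k)*(Q*k))) by ring.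
    apply Rmult_le_compat_l; lra. }
  nra.
Qed.

Lemma pw (x : R) (n d : nat) : 0 < x -> Rpower x (INR n / INR d) = (Rpower x (1 / INR d))^n.
Proof.
intros Hx. rewrite <- Rpower_pow by (unfold Rpower; apply exp_pos).
rewrite Rpower_mult. f_equal. unfold Rdiv. ring.
Qed.

Lemma sqrt_le_s (a s : R) : 0 < s -> a <= 2 * s^6 -> sqrt a <= 2 * s^3.
Proof.
intros Hs Ha.
assert (0 < s^3) by (apply pow_lt; lra).
rewrite <- (sqrt_square (2 * s^3)) by lra.
apply sqrt_le_1_alt.
replace (2 * s^3 * (2 * s^3)) with (4 * s^6) by ring.
assert (0 < s^6) by (apply pow_lt; lra). lra.
Qed.

Definition KK (C0 : R) := 24 * C0^7 + 144 * C0^8 + 16 * C0^2.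

Lemma rp_subst (m q : R) (P : R -> R -> Prop) : 0 < m -> 0 < q ->
  (forall s Q, 0 < s -> 0 < Q -> m = s^6 -> q = Q^3 ->
     P q (s^16 * Q^2 + s^21)) ->
  P q (Rpower m (8 / 3) * Rpower q (2 / 3) + Rpower m (7 / 2)).
Proof.
intros Hm Hq H.
assert (E1 : 8/3 = INR 16 / INR 6) by (simpl; field).
assert (E2 : 2/3 = INR 2 / INR 3) by (simpl; field).
assert (E3 : 7/2 = INR 21 / INR 6) by (simpl; field).
rewrite E1, E2, E3, !pw by lra.
apply H.
- unfold Rpower; apply exp_pos.
- unfold Rpower; apply exp_pos.
- rewrite <- pw by lra. replace (INR 6 / INR 6) with 1 by (simpl; field). now rewrite Rpower_1.
- rewrite <- pw by lra. replace (INR 3 / INR 3) with 1 by (simpl; field). now rewrite Rpower_1.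
Qed.

Lemma real_main (C0 k m q a b la lb ma mb R1 R2 T : R) :
  1 <= C0 -> 1 <= m -> 0 < q ->
  m / 2 <= a <= 2 * m -> m / 2 <= b <= 2 * m ->
  k <= C0 * sqrt a ->
  1 <= la <= C0 * k -> 1 <= lb <= C0 * k ->
  0 <= ma -> ma * k <= C0 * a -> 0 <= mb -> mb * k <= C0 * b ->
  0 <= R1 <= a*a + a*a*(2*la) + la*(la+ma)*la*ma ->
  0 <= R2 <= b*b + b*b*(2*lb) + lb*(lb+mb)*lb*mb ->
  0 <= T <= a*b*b*la + la*(la+ma)*b*(lb+mb)*ma ->
  Rmin (q * sqrt (R1 * R2)) T <=
  KK C0 * (Rpower m (8 / 3) * Rpower q (2 / 3) + Rpower m (7 / 2)).
Proof.
intros HC Hm Hq Ha Hb Hk Hla Hlb Hma Hmak Hmb Hmbk HR1 HR2 HT.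
apply (rp_subst m q (fun q' Z => Rmin (q' * sqrt (R1 * R2)) T <= KK C0 * Z)); try lra.
intros s Q Hs HQ Em Eq. subst q. rewrite Em in Ha, Hb.
unfold KK. apply real_core with (k := k) (a := a) (b := b) (la := la) (lb := lb) (ma := ma) (mb := mb);
  try assumption.
assert (sqrt a <= 2 * s^3) by (apply sqrt_le_s; lra).
assert (C0 * sqrt a <= C0 * (2 * s^3)) by (apply Rmult_le_compat_l; lra).
lra.
Qed.

Lemma real_irr (C0 m q a b c X T : R) :
  1 <= C0 -> 1 <= m -> 0 < q ->
  0 <= a <= 2 * m -> 0 <= b <= 2 * m -> 0 <= c <= sqrt a ->
  0 <= T <= a * b * b * c ->
  Rmin X T <= KK C0 * (Rpower m (8 / 3) * Rpower q (2 / 3) + Rpower m (7 / 2)).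
Proof.
intros HC Hm Hq Ha Hb Hc HT.
apply (rp_subst m q (fun q' Z => Rmin X T <= KK C0 * Z)); try lra.
intros s Q Hs HQ Em Eq. rewrite Em in Ha, Hb.
assert (Hsq : sqrt a <= 2 * s^3) by (apply sqrt_le_s; lra).
assert (HT2 : a*b*b*c <= (2*s^6)*(2*s^6)*(2*s^6)*(2*s^3)).
{ pl; pl; pl; lra. }
apply Rle_trans with T; [apply Rmin_r|].
assert (0 <= s^16 * Q^2) by (assert (0 < s^16) by (apply pow_lt; lra); assert (0 < Q^2) by (apply pow_lt; lra); nra).
assert (E : (2*s^6)*(2*s^6)*(2*s^6)*(2*s^3) = 16 * s^21) by ring.
assert (0 < s^21) by (apply pow_lt; lra).
assert (1 <= C0^2) by nra.
assert (0 <= 24 * C0^7 + 144 * C0^8) by (assert (0 < C0^7) by (apply pow_lt; lra); assert (0 < C0^8) by (apply pow_lt; lra); lra).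
unfold KK. nra.
Qed.
End RealPart.

From mathcomp Require Import all_boot all_order all_algebra.
From Stdlib Require Import Reals.
Import GRing.Theory.
From mathcomp Require Import ring zify.
Set Implicit Arguments. Unset Strict Implicit. Unset Printing Implicit Defensive.
Delimit Scope ring_scope with R.
Delimit Scope nat_scope with N.

Section Geo.
Variable F : finFieldType.
Local Open Scope ring_scope.
Hypothesis hF : neg1_nonsquare F.

Definition cross (u v : pt F) : F := u.1 * v.2 - u.2 * v.1.
Definition perp (u : pt F) : pt F := (- u.2, u.1).
Definition vadd (x y : pt F) : pt F := (x.1 + y.1, x.2 + y.2).

Lemma aniso (u : pt F) : dot u u = 0 -> u = (0,0).
Proof.
case: u => a b; rewrite /dot /= => h.
have [a0|an0] := eqVneq a 0.
  move: h; rewrite a0 mul0r add0r => /eqP; rewrite mulf_eq0 orbb => /eqP ->.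
  by [].
exfalso; apply: hF; exists (b / a).
have h2 : b * b = - (a * a) by apply/eqP; rewrite -subr_eq0 opprK addrC h.
by rewrite mulrACA -invfM h2 mulNr divff // mulf_neq0.
Qed.

Lemma mem_line (p v x : pt F) :
  (x \in line_through p v) <-> exists t, x = (p.1 + t * v.1, p.2 + t * v.2).
Proof.
split; first by case/imsetP => t _ ->; exists t.
by case=> t ->; apply/imsetP; exists t.
Qed.

Lemma line_cross (p v x : pt F) : v != (0,0) ->
  (x \in line_through p v) = (cross (psub x p) v == 0).
Proof.
move=> hv; apply/idP/idP.
  by case/mem_line => t ->; rewrite /cross /psub /=; apply/eqP; ring.
move: hv; case: v => v1 v2; case: x => x1 x2; case: p => p1 p2.
rewrite /cross /psub /= => hv /eqP h; apply/mem_line => /=.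
have [v10|v1n0] := eqVneq v1 0.
  have v2n0 : v2 != 0 by apply: contraNneq hv => ->; rewrite v10.
  exists ((x2 - p2) / v2); rewrite divfK //; congr (_, _); last by ring.
  move: h; rewrite v10 !mulr0 subr0 => /eqP; rewrite mulf_eq0.
  by rewrite (negPf v2n0) orbF subr_eq0 => /eqP ->; rewrite addr0.
exists ((x1 - p1) / v1); rewrite divfK //; congr (_, _); first by ring.
apply: (mulIf v1n0); rewrite mulrDl mulrAC divfK //.
move/eqP: h; rewrite subr_eq0 => /eqP ->; ring.
Qed.

Lemma line_eq (l : {set pt F}) x y : is_line l -> x \in l -> y \in l -> x != y ->
  l = [set z | cross (psub z x) (psub y x) == 0].
Proof.
case=> p [v [hv ->]] hx hy hxy.
have [t1 e1] := (iffLR (mem_line p v x)) hx.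
have [t2 e2] := (iffLR (mem_line p v y)) hy.
have ht : t2 - t1 != 0.
  apply: contraNneq hxy => /eqP; rewrite subr_eq0 => /eqP et.
  by rewrite e1 e2 et.
apply/setP=> z; rewrite inE line_cross //.
have -> : cross (psub z x) (psub y x) = (t2 - t1) * cross (psub z p) v.
  by rewrite e1 e2 /cross /psub /=; ring.
by rewrite mulf_eq0 (negPf ht).
Qed.

Lemma lines_meet (l1 l2 : {set pt F}) : is_line l1 -> is_line l2 -> l1 != l2 ->
  (#|l1 :&: l2| <= 1)%N.
Proof.
move=> h1 h2 hne; apply/card_le1_eqP => x y.
rewrite !inE => /andP [x1 x2] /andP [y1 y2].
apply/eqP; apply/negP => /negP hxy; rewrite eq_sym in hxy; move/negP: hne; apply.
by rewrite (line_eq h1 x1 y1 hxy) (line_eq h2 x2 y2 hxy).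
Qed.
End Geo.

Lemma card_inj_le (T U : finType) (X : {set T}) (Y : {set U}) (g : T -> U) :
 {in X &, injective g} -> (forall x, x \in X -> g x \in Y) -> #|X| <= #|Y|.
Proof.
move=> inj hY; rewrite -(card_in_imset inj); apply: subset_leq_card.
by apply/subsetP => y /imsetP [x hx ->]; apply: hY.
Qed.

Lemma card_part_le (T U : finType) (S : {set T}) (f : T -> U) (g : U -> nat) :
 (forall u, #|[set x in S | f x == u]| <= g u) -> #|S| <= \sum_u g u.
Proof.
move=> h; rewrite -sum1_card (partition_big f predT) //=.
apply: leq_sum => u _; apply: leq_trans (h u).
by rewrite -sum1_card; apply/eq_leq/eq_bigl => x; rewrite inE.
Qed.

Lemma sum_mem_const (T : finType) (S : {set T}) c :
  \sum_(u : T) (u \in S) * c = #|S| * c.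
Proof.
rewrite -big_distrl /= -sum1_card [in RHS]big_mkcond /=.
by congr (_ * _); apply: eq_bigr => u _; case: (u \in S).
Qed.

Lemma sum_in_card (T : finType) (X Y : {set T}) :
  \sum_(x in X) (x \in Y) = #|Y :&: X|.
Proof.
rewrite big_mkcond -sum1_card [in RHS]big_mkcond /=.
by apply: eq_bigr => x _; rewrite inE; case: (x \in X); case: (x \in Y).
Qed.

Section Part.
Variable F : finFieldType.
Variables (A : {set pt F}) (L : {set {set pt F}}) (AL : {set pt F} -> {set pt F}) (M : nat).
Hypothesis hL : forall l, l \in L -> is_line l.
Hypothesis hA : A = \bigcup_(l in L) AL l.
Hypothesis hsub : forall l, l \in L -> AL l \subset l.
Hypothesis hM : forall l, l \in L -> #|AL l| <= M.

Lemma line_count_gen (ell : {set pt F}) (X : {set pt F}) N :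
  is_line ell -> X \subset A -> X \subset ell ->
  (ell \in L -> #|AL ell :&: X| <= N) -> #|X| <= #|L| + (ell \in L) * N.
Proof.
move=> hell hXA hXl hN.
have step1 : #|X| <= \sum_(l in L) #|AL l :&: X|.
  rewrite -sum1_card.
  apply: (@leq_trans (\sum_(x in X) \sum_(l in L) (x \in AL l))).
    apply: leq_sum => x hx.
    have : x \in A by apply: (subsetP hXA).
    rewrite hA => /bigcupP [l hl hxl].
    by rewrite (bigD1 l) //= hxl leq_addr.
  rewrite exchange_big /=; apply: leq_sum => l _.
  by rewrite sum_in_card.
apply: (leq_trans step1).
apply: (@leq_trans (\sum_(l in L) (1 + (l == ell) * N))).
  apply: leq_sum => l hl.
  have [el|hne] := eqVneq l ell.
    by subst l; rewrite mul1n add1n ltnW // ltnS hN.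
  rewrite mul0n addn0.
  apply: leq_trans (lines_meet (hL hl) hell hne).
  apply: subset_leq_card; apply/subsetP => x; rewrite !inE => /andP [h1 h2].
  by rewrite (subsetP (hsub hl)) // (subsetP hXl).
rewrite big_split /= sum1_card leq_add2l.
case hin: (ell \in L).
  by rewrite (bigD1 ell) //= eqxx mul1n big1 ?addn0 // => l /andP [_ /negPf ->].
by rewrite big1 // => l hl; have -> : (l == ell) = false by apply/negP => /eqP e; rewrite -e hl in hin.
Qed.

End Part.

Section Trap.
Variable F : finFieldType.
Local Open Scope ring_scope.

Lemma trap_sub (x1 x2 x3 x4 : pt F) :
  trapezoid x1 x2 x3 x4 -> x2 \in line_through x1 (psub x3 x4).
Proof.
case/existsP => l /eqP h; apply/mem_line; exists (- l).
case: x1 x2 h => [a1 a2] [b1 b2]; rewrite /psub /= => -[e1 e2].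
by congr (_, _); rewrite mulNr -?e1 -?e2; ring.
Qed.

Lemma line0 (p : pt F) : line_through p (0,0) = [set p].
Proof.
apply/setP => x; rewrite inE; apply/idP/eqP.
  by case/mem_line => t ->; rewrite /= !mulr0 !addr0; case: p.
by move=> ->; apply/mem_line; exists 0; rewrite /= !mulr0 !addr0; case: p.
Qed.

Local Close Scope ring_scope.

Lemma ntrap_le (A B : {set pt F}) (g : (pt F * pt F) * pt F -> nat) :
  (forall x1 x3 x4, x1 \in A -> x3 \in B -> x4 \in B ->
     #|A :&: line_through x1 (psub x3 x4)| <= g ((x1, x3), x4)) ->
  ntrap A B <= \sum_u g u.
Proof.
move=> hg; rewrite /ntrap.
apply: (card_part_le (f := fun q : pt F * pt F * pt F * pt F => ((q.1.1.1, q.1.2), q.2))).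
case=> [[y1 y3] y4].
case hc: [&& y1 \in A, y3 \in B & y4 \in B]; last first.
  apply: (@leq_trans 0); last by [].
  rewrite leqn0 cards_eq0; apply/eqP/setP => q; rewrite !inE.
  apply/negP => /andP [/and5P [h1 _ h3 h4 _] /eqP [e1 e3 e4]].
  by move: hc; rewrite -e1 -e3 -e4 h1 h3 h4.
case/and3P: hc => h1 h3 h4.
apply: leq_trans (hg _ _ _ h1 h3 h4).
apply: (card_inj_le (g := fun q : pt F * pt F * pt F * pt F => q.1.1.2)).
  move=> [[[a1 a2] a3] a4] [[[b1 b2] b3] b4]; rewrite !inE /=.
  move=> /andP [_ /eqP [e1 e3 e4]] /andP [_ /eqP [f1 f3 f4]] /= e2.
  by rewrite e1 e3 e4 f1 f3 f4 e2.
move=> [[[a1 a2] a3] a4]; rewrite !inE /=.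
case/andP => /and5P [_ ha2 _ _ ht] /eqP [e1 e3 e4].
by rewrite ha2 -e1 -e3 -e4 trap_sub.
Qed.
End Trap.

Definition part (F : finFieldType) (A : {set pt F}) (L : {set {set pt F}})
  (AL : {set pt F} -> {set pt F}) (M : nat) :=
  [/\ (forall l, l \in L -> is_line l), A = \bigcup_(l in L) AL l,
      (forall l, l \in L -> AL l \subset l) & (forall l, l \in L -> #|AL l| <= M)].

Lemma line_count (F : finFieldType) A L AL M (ell : {set pt F}) :
  part A L AL M -> is_line ell -> #|A :&: ell| <= #|L| + (ell \in L) * M.
Proof.
case=> h1 h2 h3 h4 hell.
apply: (line_count_gen h1 h2 h3 hell); rewrite ?subsetIl ?subsetIr //.
by move=> hin; apply: leq_trans (h4 _ hin); apply: subset_leq_card; rewrite subsetIl.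
Qed.

Section Rect.
Variable F : finFieldType.
Hypothesis hF : neg1_nonsquare F.

Lemma rect_prop (x0 x1 x2 x3 : pt F) : rectangle x0 x1 x2 x3 ->
  x2 = vadd x1 (psub x3 x0) /\ dot (psub x3 x0) (psub x1 x0) = 0%R.
Proof.
case/and4P => /eqP c1 /eqP c2 /eqP c3 /eqP c4.
set y : pt F := (x2.1 - x1.1 + (x0.1 - x3.1), x2.2 - x1.2 + (x0.2 - x3.2))%R.
have hy : dot y y = 0%R.
  have -> : dot y y = (- (dot (psub x1 x0) (psub x2 x1) + dot (psub x2 x1) (psub x3 x2)
      + dot (psub x3 x2) (psub x0 x3) + dot (psub x0 x3) (psub x1 x0)))%R.
    by rewrite /dot /y /psub /=; ring.
  by rewrite c1 c2 c3 c4 !addr0 oppr0.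
have [e1 e2] : (x2.1 - x1.1 + (x0.1 - x3.1) = 0 /\ x2.2 - x1.2 + (x0.2 - x3.2) = 0)%R.
  by move: (aniso hF hy); rewrite /y => -[-> ->].
split.
  clear c1 c2 c3 c4 hy y.
  case: x2 e1 e2 => a b /= e1 e2; rewrite /vadd /psub /=; congr (_, _).
    by apply/eqP; rewrite -subr_eq0; apply/eqP; rewrite -e1; ring.
  by apply/eqP; rewrite -subr_eq0; apply/eqP; rewrite -e2; ring.
have -> : dot (psub x3 x0) (psub x1 x0) = (- dot (psub x0 x3) (psub x1 x0))%R.
  by rewrite /dot /psub /=; ring.
by rewrite c4 oppr0.
Qed.

Lemma nrect_le (A : {set pt F}) (g : pt F * pt F -> nat) :
  (forall x0 x1, x0 \in A -> x1 \in A ->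
     #|[set x3 in A | (dot (psub x3 x0) (psub x1 x0) == 0%R) && (vadd x1 (psub x3 x0) \in A)]|
       <= g (x0, x1)) ->
  nrect A <= \sum_u g u.
Proof.
move=> hg; rewrite /nrect.
apply: (card_part_le (f := fun q : pt F * pt F * pt F * pt F => (q.1.1.1, q.1.1.2))).
case=> [y0 y1].
case hc: [&& y0 \in A & y1 \in A]; last first.
  apply: (@leq_trans 0); last by [].
  rewrite leqn0 cards_eq0; apply/eqP/setP => q; rewrite !inE.
  apply/negP => /andP [/and5P [h1 h2 _ _ _] /eqP [e1 e2]].
  by move: hc; rewrite -e1 -e2 h1 h2.
case/andP: hc => h0 h1.
apply: leq_trans (hg _ _ h0 h1).
apply: (card_inj_le (g := fun q : pt F * pt F * pt F * pt F => q.2)).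
  move=> [[[a0 a1] a2] a3] [[[b0 b1] b2] b3]; rewrite !inE /=.
  move=> /andP [/and5P [_ _ _ _ ra] /eqP [e0 e1]] /andP [/and5P [_ _ _ _ rb] /eqP [f0 f1]] /= e3.
  case: (rect_prop ra) => -> _; case: (rect_prop rb) => -> _.
  by rewrite e0 e1 f0 f1 e3.
move=> [[[a0 a1] a2] a3]; rewrite !inE /=.
case/andP => /and5P [_ _ ha2 ha3 r] /eqP [e0 e1].
case: (rect_prop r) => e2 d.
by rewrite ha3 -e0 -e1 d eqxx -e2 ha2.
Qed.
End Rect.

Section RectReg.
Variable F : finFieldType.
Hypothesis hF : neg1_nonsquare F.
Variables (A : {set pt F}) (L : {set {set pt F}}) (AL : {set pt F} -> {set pt F}) (M : nat).
Hypothesis hP : part A L AL M.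

Definition Yset (x0 x1 : pt F) :=
  [set x3 in A | (dot (psub x3 x0) (psub x1 x0) == 0%R) && (vadd x1 (psub x3 x0) \in A)].

Lemma cross_perp (w u : pt F) : cross w (perp u) = dot w u.
Proof. by rewrite /cross /perp /dot /=; ring. Qed.

Lemma perp_neq0 (x0 x1 : pt F) : x0 != x1 -> perp (psub x1 x0) != (0%R, 0%R).
Proof.
move=> hne; apply: contraNneq hne; case: x0 x1 => a b [c d].
rewrite /perp /psub /= => -[/eqP h1 /eqP h2].
move: h1 h2; rewrite oppr_eq0 !subr_eq0 => /eqP -> /eqP ->.
by [].
Qed.

Lemma rect_fiber_ne (x0 x1 : pt F) : x0 != x1 ->
  #|Yset x0 x1| <= 2 * #|L| +
     ((line_through x0 (perp (psub x1 x0)) \in L) &&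
      (line_through x1 (perp (psub x1 x0)) \in L)) * M.
Proof.
move=> hne.
set u := psub x1 x0.
set p := line_through x0 (perp u).
set p' := line_through x1 (perp u).
have hu := perp_neq0 hne.
have lp : is_line p by exists x0, (perp u).
have lp' : is_line p' by exists x1, (perp u).
case: (hP) => h1 h2 h3 h4.
have hp' : #|A :&: p'| <= #|L| + (p' \in L) * M := line_count hP lp'.
have hY : #|Yset x0 x1| <= #|L| + (p \in L) * (#|L| + (p' \in L) * M).
  apply: (line_count_gen h1 h2 h3 lp).
  - by apply/subsetP => x; rewrite inE => /andP [].
  - apply/subsetP => x; rewrite inE => /andP [_ /andP [/eqP hd _]].
    by rewrite /p line_cross // cross_perp hd.
  - move=> _; apply: leq_trans hp'.
    apply: (card_inj_le (g := fun x3 => vadd x1 (psub x3 x0))).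
      move=> a b _ _; case: a b => a1 a2 [b1 b2].
      rewrite /vadd /psub /= => -[e1 e2].
      by congr (_, _); [move: e1 | move: e2] => /addrI /addIr.
    move=> x; rewrite /Yset !inE; case/and4P => _ _ /eqP hd -> /=.
    rewrite /p' line_cross //.
    have -> : psub (vadd x1 (psub x x0)) x1 = psub x x0.
      by rewrite /psub /vadd /=; congr (_, _); ring.
    by rewrite cross_perp hd.
apply: (leq_trans hY).
by case: (p \in L); case: (p' \in L); rewrite /= ?mul1n ?mul0n ?addn0; lia.
Qed.
End RectReg.

Section Bad.
Variable F : finFieldType.
Hypothesis hF : neg1_nonsquare F.

Lemma cross_pp (a b : pt F) : cross (perp a) (perp b) = cross a b.
Proof. by rewrite /cross /perp /=; ring. Qed.

Lemma on_line0 (p v : pt F) : p \in line_through p v.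
Proof. by apply/mem_line; exists 0%R; rewrite !mul0r !addr0; case: p. Qed.

Lemma on_line1 (p v : pt F) : vadd p v \in line_through p v.
Proof. by apply/mem_line; exists 1%R; rewrite !mul1r. Qed.

Lemma dc0 (d u : pt F) : u != (0%R, 0%R) -> dot d u = 0%R -> cross d u = 0%R -> d = (0%R, 0%R).
Proof.
move=> hu hd hc.
have hN : dot u u != 0%R by apply: contra_neq hu => /(aniso hF).
case: d u hu hd hc hN => d1 d2 [u1 u2]; rewrite /dot /cross /= => _ hd hc hN.
have e1 : (d1 * (u1 * u1 + u2 * u2) = u1 * (d1 * u1 + d2 * u2) + u2 * (d1 * u2 - d2 * u1))%R by ring.
have e2 : (d2 * (u1 * u1 + u2 * u2) = u2 * (d1 * u1 + d2 * u2) - u1 * (d1 * u2 - d2 * u1))%R by ring.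
rewrite hd hc !mulr0 ?addr0 ?subr0 in e1 e2.
by congr (_, _); [move/eqP: e1 | move/eqP: e2]; rewrite mulf_eq0 (negPf hN) orbF => /eqP.
Qed.

Lemma psub_neq0 (x0 x1 : pt F) : x0 != x1 -> psub x1 x0 != (0%R, 0%R).
Proof.
move=> hne; apply: contraNneq hne; case: x0 x1 => a b [c d].
rewrite /psub /= => -[/eqP h1 /eqP h2].
by move: h1 h2; rewrite !subr_eq0 => /eqP -> /eqP ->.
Qed.

Lemma bad_uniq (x0 x1 y1 : pt F) : x0 != x1 -> x0 != y1 ->
  line_through x0 (perp (psub x1 x0)) = line_through x0 (perp (psub y1 x0)) ->
  line_through x1 (perp (psub x1 x0)) = line_through y1 (perp (psub y1 x0)) ->
  x1 = y1.
Proof.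
move=> h1 h2 e1 e2.
have hu := perp_neq0 h1.
have hu0 := psub_neq0 h1.
have m1 : y1 \in line_through x1 (perp (psub x1 x0)) by rewrite e2 on_line0.
have m2 : vadd x0 (perp (psub y1 x0)) \in line_through x0 (perp (psub x1 x0)) by rewrite e1 on_line1.
rewrite line_cross // cross_perp in m1.
rewrite line_cross // in m2.
have hd : dot (psub (psub y1 x0) (psub x1 x0)) (psub x1 x0) = 0%R.
  by move/eqP: m1 => <-; rewrite /dot /psub /=; ring.
have hc : cross (psub (psub y1 x0) (psub x1 x0)) (psub x1 x0) = 0%R.
  move/eqP: m2; rewrite -cross_pp => <-; rewrite /cross /perp /psub /vadd /=; ring.
have := dc0 hu0 hd hc; case: x1 y1 {e1 e2 m1 m2 hd hc hu hu0 h1 h2} => a b [c d].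
rewrite /psub /= => -[f1 f2]; congr (_, _); apply/eqP; rewrite -subr_eq0 -oppr_eq0.
  by rewrite -f1; apply/eqP; ring.
by rewrite -f2; apply/eqP; ring.
Qed.
End Bad.

Section RectTot.
Variable F : finFieldType.
Hypothesis hF : neg1_nonsquare F.
Variables (A : {set pt F}) (L : {set {set pt F}}) (AL : {set pt F} -> {set pt F}) (M : nat).
Hypothesis hP : part A L AL M.

Definition BadR := [set w : pt F * pt F | [&& w.1 \in A, w.2 \in A, w.1 != w.2,
   line_through w.1 (perp (psub w.2 w.1)) \in L & line_through w.2 (perp (psub w.2 w.1)) \in L]].

Lemma card_D : #|[set w : {set pt F} * pt F | (w.1 \in L) && (w.2 \in A :&: w.1)]| <= #|L| * (#|L| + M).
Proof.
apply: leq_trans (card_part_le (f := fst) (g := fun l => (l \in L) * (#|L| + M)) _) _.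
  move=> l; case hl: (l \in L); last first.
    rewrite mul0n leqn0 cards_eq0; apply/eqP/setP => w; rewrite !inE.
    by apply/negP => /andP [/andP [h1 _] /eqP e]; rewrite -e h1 in hl.
  rewrite mul1n.
  have hl' : is_line l by case: hP => h1 _ _ _; apply: h1.
  apply: leq_trans (_ : #|A :&: l| <= _); last first.
    by apply: leq_trans (line_count hP hl') _; rewrite hl mul1n.
  apply: (card_inj_le (g := snd)).
    by move=> [a1 a2] [b1 b2]; rewrite !inE /= => /andP [_ /eqP ->] /andP [_ /eqP ->] /= ->.
  by move=> [a1 a2]; rewrite !inE /= => /andP [/andP [_ h] /eqP e]; rewrite -e.
by rewrite sum_mem_const.
Qed.

Lemma card_BadR : #|BadR| <= #|L| * (#|L| + M) * #|L|.
Proof.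
set D := [set w : {set pt F} * pt F | (w.1 \in L) && (w.2 \in A :&: w.1)].
apply: leq_trans (card_part_le
   (f := fun w : pt F * pt F => ((line_through w.1 (perp (psub w.2 w.1)), w.1),
                                 line_through w.2 (perp (psub w.2 w.1))))
   (g := fun u => (u \in setX D L) * 1) _) _; last first.
  by rewrite sum_mem_const cardsX muln1 leq_mul2r card_D orbT.
case=> [[l y0] l'].
case hc: (((l, y0), l') \in setX D L); last first.
  rewrite mul0n leqn0 cards_eq0; apply/eqP/setP => w; rewrite !inE.
  apply/negP => /andP [/and5P [h0 h1 _ h3 h4] /eqP [e1 e2 e3]].
  by move: hc; rewrite !inE /= -e1 -e2 -e3 h3 h4 h0 on_line0.
rewrite mul1n; apply/card_le1_eqP => w w'; rewrite !inE.
case: w w' => [a0 a1] [b0 b1] /= /andP [/and5P [_ _ ha _ _] /eqP [e1 e2 e3]].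
case/andP => [/and5P [_ _ hb _ _] /eqP [f1 f2 f3]].
subst y0 b0; congr (_, _); apply: (bad_uniq hF hb ha); by rewrite ?f1 ?e1 ?f3 ?e3.
Qed.

Definition Diag := [set w : pt F * pt F | (w.1 \in A) && (w.2 == w.1)].

Lemma card_Diag : #|Diag| <= #|A|.
Proof.
apply: (card_inj_le (g := fst)).
  by move=> [a1 a2] [b1 b2]; rewrite !inE /= => /andP [_ /eqP ->] /andP [_ /eqP ->] /= ->.
by move=> [a1 a2]; rewrite !inE /= => /andP [].
Qed.

Lemma nrect_reg : nrect A <= #|A| * #|A| + #|A| * #|A| * (2 * #|L|) + #|L| * (#|L| + M) * #|L| * M.
Proof.
apply: leq_trans (nrect_le hF (g := fun u => (u \in Diag) * #|A| + (u \in setX A A) * (2 * #|L|)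
                                          + (u \in BadR) * M) _) _.
  move=> x0 x1 h0 h1.
  have hA : (x0, x1) \in setX A A by rewrite inE h0 h1.
  rewrite hA mul1n.
  have [e|hne] := eqVneq x0 x1.
    have hD : (x0, x1) \in Diag by rewrite inE /= h0 e eqxx.
    rewrite hD mul1n -addnA; apply: leq_trans (leq_addr _ _).
    by apply: subset_leq_card; apply/subsetP => x; rewrite inE => /andP [].
  apply: leq_trans (rect_fiber_ne hP hne) _.
  suff -> : ((line_through x0 (perp (psub x1 x0)) \in L) && (line_through x1 (perp (psub x1 x0)) \in L))
    = ((x0, x1) \in BadR) by rewrite -addnA leq_addl.
  by rewrite inE /= h0 h1 hne.
rewrite !big_split /= !sum_mem_const cardsX.
apply: leq_add; first (apply: leq_add => //; apply: leq_mul => //; exact: card_Diag).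
apply: leq_mul => //; exact: card_BadR.
Qed.
End RectTot.

Lemma psub_vadd (F : finFieldType) (P w : pt F) : psub (vadd P w) P = w.
Proof. by case: P w => a b [c d]; rewrite /psub /vadd /=; congr (_, _); ring. Qed.

Section TrapTot.
Variable F : finFieldType.
Variables (A B : {set pt F}) (LA LB : {set {set pt F}}) (ALA ALB : {set pt F} -> {set pt F}) (MA MB : nat).
Hypothesis hPA : part A LA ALA MA.
Hypothesis hPB : part B LB ALB MB.

Definition BadT := [set u : pt F * pt F * pt F | [&& u.1.1 \in A, u.1.2 \in B, u.2 \in B,
   psub u.1.2 u.2 != (0%R, 0%R) & line_through u.1.1 (psub u.1.2 u.2) \in LA]].

Lemma card_BadT : #|BadT| <= #|LA| * (#|LA| + MA) * #|B| * (#|LB| + MB).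
Proof.
set D := [set w : {set pt F} * pt F | (w.1 \in LA) && (w.2 \in A :&: w.1)].
apply: leq_trans (card_part_le
   (f := fun u : pt F * pt F * pt F => ((line_through u.1.1 (psub u.1.2 u.2), u.1.1), u.1.2))
   (g := fun v => (v \in setX D B) * (#|LB| + MB)) _) _; last first.
  by rewrite sum_mem_const cardsX leq_mul2r leq_mul2r (card_D hPA) !orbT.
case=> [[l y1] y3].
set Z := [set u in BadT | _].
have [Z0|[z hz]] := set_0Vmem Z; first by rewrite Z0 cards0.
have hz' := hz; rewrite !inE /= in hz'.
case/andP: hz' => /and5P [h1 h3 h4 hw hl] /eqP [e1 e2 e3].
have hc : ((l, y1), y3) \in setX D B by rewrite !inE /= -e1 -e2 -e3 hl h1 h3 on_line0.
rewrite hc mul1n.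
have lz : is_line (line_through y3 (psub y3 z.2)) by exists y3, (psub y3 z.2); rewrite -e3.
apply: leq_trans (_ : #|B :&: line_through y3 (psub y3 z.2)| <= _); last first.
  apply: leq_trans (line_count hPB lz) _; rewrite leq_add2l.
  by case: (_ \in LB); rewrite ?mul1n ?mul0n.
apply: (card_inj_le (g := snd)).
  move=> [[a1 a3] a4] [[b1 b3] b4]; rewrite !inE /=.
  move=> /andP [_ /eqP [_ f2 f3]] /andP [_ /eqP [_ g2 g3]] /= ->.
  by rewrite f2 f3 g2 g3.
move=> [[a1 a3] a4]; rewrite !inE /= => /andP [/and5P [_ _ ha4 hwa _] /eqP [f1 f2 f3]].
rewrite ha4 /= line_cross -?e3 //.
have : vadd a1 (psub a3 a4) \in line_through z.1.1 (psub z.1.2 z.2).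
  by rewrite e1 -f1 f2 -e2 on_line1.
rewrite line_cross // f2 -e2 e3 -f3.
rewrite psub_vadd.
move/eqP => hc0; apply/eqP; rewrite -oppr0 -hc0 /cross /psub /=; ring.
Qed.

Lemma ntrap_reg : ntrap A B <= #|A| * #|B| * #|B| * #|LA| + #|LA| * (#|LA| + MA) * #|B| * (#|LB| + MB) * MA.
Proof.
apply: leq_trans (ntrap_le (g := fun u => (u \in setX (setX A B) B) * #|LA| + (u \in BadT) * MA) _) _.
  move=> x1 x3 x4 h1 h3 h4.
  rewrite !inE h1 h3 h4 /= mul1n.
  have hLA : 0 < #|LA|.
    case: hPA => _ hA _ _; move: h1; rewrite hA => /bigcupP [l hl _].
    by apply/card_gt0P; exists l.
  have [w0|wn0] := eqVneq (psub x3 x4) (0%R, 0%R).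
    rewrite w0 line0; apply: leq_trans (leq_addr _ _).
    by apply: leq_trans hLA; apply: (leq_trans (subset_leq_card (subsetIr _ _))); rewrite cards1.
  have hl : is_line (line_through x1 (psub x3 x4)) by exists x1, (psub x3 x4).
  apply: leq_trans (line_count hPA hl) _.
  by [].
rewrite big_split /= !sum_mem_const !cardsX.
by apply: leq_add => //; apply: leq_mul => //; exact: card_BadT.
Qed.
End TrapTot.

Lemma ntrap_irr (F : finFieldType) (A B : {set pt F}) c :
  (forall ell, is_line ell -> #|ell :&: A| <= c) -> 1 <= c ->
  ntrap A B <= #|A| * #|B| * #|B| * c.
Proof.
move=> hc c1.
apply: leq_trans (ntrap_le (g := fun u => (u \in setX (setX A B) B) * c) _) _.
  move=> x1 x3 x4 h1 h3 h4; rewrite !inE h1 h3 h4 /= mul1n.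
  have [w0|wn0] := eqVneq (psub x3 x4) (0%R, 0%R).
    rewrite w0 line0; apply: leq_trans c1.
    by apply: (leq_trans (subset_leq_card (subsetIr _ _))); rewrite cards1.
  by rewrite setIC; apply: hc; exists x1, (psub x3 x4).
by rewrite sum_mem_const !cardsX.
Qed.

Delimit Scope R_scope with R.

Lemma natRD (m n : nat) : INR (m + n) = (INR m + INR n)%R.
Proof. by rewrite -plusE plus_INR. Qed.

Lemma natRM (m n : nat) : INR (m * n) = (INR m * INR n)%R.
Proof. by rewrite -multE mult_INR. Qed.

Lemma INR_leq (m n : nat) : m <= n -> (INR m <= INR n)%R.
Proof. by move/leP; apply: le_INR. Qed.

Lemma INR_pos_gt0 (n : nat) : (0 < INR n)%R -> 0 < n.
Proof. by case: n => // h; exfalso; simpl in h; lra. Qed.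

Lemma nat_sqrt_bound (x n : nat) : (INR x <= sqrt (INR n))%R -> x <= Nat.sqrt n.
Proof.
move=> h.
have h0 := pos_INR x.
have hn := pos_INR n.
have h2 : (INR x * INR x <= INR n)%R.
  have := sqrt_sqrt (INR n) hn.
  have := Rmult_le_compat _ _ _ _ h0 h0 h h; lra.
rewrite -natRM in h2; move/INR_le: h2 => h2.
apply/leP; rewrite -{1}(Nat.sqrt_square x); apply: Nat.sqrt_le_mono.
exact: h2.
Qed.

Lemma INR_sqrt_le (n : nat) : (INR (Nat.sqrt n) <= sqrt (INR n))%R.
Proof.
have [h _] := Nat.sqrt_spec n (Nat.le_0_l n).
have h' : (INR (Nat.sqrt n) * INR (Nat.sqrt n) <= INR n)%R.
  by rewrite -natRM; apply: le_INR.
rewrite -(sqrt_square (INR (Nat.sqrt n))); last exact: pos_INR.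
exact: sqrt_le_1_alt.
Qed.

Theorem proposition4p4 :
  forall C0 : R, (1 <= C0)%R ->
  exists K : R, forall (F : finFieldType),
    odd_char F ->
    neg1_nonsquare F ->
    forall (m : R) (A B : {set pt F}),
      (1 <= m)%R ->
      (m / 2 <= INR #|A| <= 2 * m)%R ->
      (m / 2 <= INR #|B| <= 2 * m)%R ->
      ((exists k : R, k_regular C0 k A /\ k_regular C0 k B) \/
       (irregular A /\ irregular B)) ->
      (Rmin (INR #|[set: F]| * sqrt (INR (nrect A) * INR (nrect B)))
            (INR (ntrap A B))
       <= K * (Rpower m (8 / 3) * Rpower (INR #|[set: F]|) (2 / 3)
               + Rpower m (7 / 2)))%R.
Proof.
move=> C0 HC; exists (KK C0) => F hodd hF m A B hm hA hB hcase.
have hq : (0 < INR #|[set: F]|)%R.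
  apply: lt_0_INR; apply/ltP; apply/card_gt0P; exists (GRing.one F); by rewrite inE.
have hA0 : 0 < #|A| by apply: INR_pos_gt0; lra.
have hB0 : 0 < #|B| by apply: INR_pos_gt0; lra.
have ha0 := pos_INR #|A|.
have hb0 := pos_INR #|B|.
case: hcase => [[k [kA kB]] | [iA iB]]; last first.
  set c := Nat.sqrt #|A|.
  have hc : forall ell, is_line ell -> #|ell :&: A| <= c.
    by move=> ell hl; apply: nat_sqrt_bound; apply: iA.
  have c1 : 1 <= c.
    by apply/leP; rewrite /c -(Nat.sqrt_1); apply: Nat.sqrt_le_mono; apply/leP.
  have hT := INR_leq (@ntrap_irr _ A B c hc c1).
  rewrite !natRM in hT.
  apply: (real_irr C0 m _ (INR #|A|) (INR #|B|) (INR c)) => //; try lra.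
  - split; [exact: pos_INR | exact: INR_sqrt_le].
  - split; [exact: pos_INR | exact: hT].
case: kA => hkA [LA [ALA [hlA [[hLA1 hLA2] [hUA [_ hpA]]]]]].
case: kB => hkB [LB [ALB [hlB [[hLB1 hLB2] [hUB [_ hpB]]]]]].
set MA := \max_(l in LA) #|ALA l|.
set MB := \max_(l in LB) #|ALB l|.
have pA : part A LA ALA MA.
  split=> // l hl; [exact: (hpA l hl).1 | exact: leq_bigmax_cond].
have pB : part B LB ALB MB.
  split=> // l hl; [exact: (hpB l hl).1 | exact: leq_bigmax_cond].
have LA0 : 0 < #|LA|.
  move: hA0 => /card_gt0P [x]; rewrite hUA => /bigcupP [l hl _].
  by apply/card_gt0P; exists l.
have LB0 : 0 < #|LB|.
  move: hB0 => /card_gt0P [x]; rewrite hUB => /bigcupP [l hl _].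
  by apply/card_gt0P; exists l.
have hla1 : (1 <= INR #|LA|)%R by apply: (INR_leq LA0).
have hlb1 : (1 <= INR #|LB|)%R by apply: (INR_leq LB0).
have hk0 : (0 < k)%R by nra.
have hma : (INR MA * k <= C0 * INR #|A|)%R.
  rewrite /MA; have [l0 hl0 ->] := eq_bigmax_cond (fun l => #|ALA l|) LA0.
  case: (hpA l0 hl0) => _ [_ h].
  have := Rmult_le_compat_r k _ _ (Rlt_le _ _ hk0) h.
  by rewrite /Rdiv Rmult_assoc Rinv_l ?Rmult_1_r //; lra.
have hmb : (INR MB * k <= C0 * INR #|B|)%R.
  rewrite /MB; have [l0 hl0 ->] := eq_bigmax_cond (fun l => #|ALB l|) LB0.
  case: (hpB l0 hl0) => _ [_ h].
  have := Rmult_le_compat_r k _ _ (Rlt_le _ _ hk0) h.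
  by rewrite /Rdiv Rmult_assoc Rinv_l ?Rmult_1_r //; lra.
have h2 : INR 2 = 2%R by [].
have hR1 := INR_leq (nrect_reg hF pA).
have hR2 := INR_leq (nrect_reg hF pB).
have hT := INR_leq (ntrap_reg pA pB).
rewrite !natRD !natRM !natRD h2 in hR1 hR2.
rewrite !natRD !natRM !natRD in hT.
apply: (real_main C0 k m _ (INR #|A|) (INR #|B|) (INR #|LA|) (INR #|LB|)
   (INR MA) (INR MB)) => //; try (split; lra); try exact: pos_INR.
- split; [exact: pos_INR | exact: hR1].
- split; [exact: pos_INR | exact: hR2].
- split; [exact: pos_INR | exact: hT].
Qed.
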